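(* Let $(\Omega(\mathcal{A}),d)$ be a differential calculus on a complex algebra $\mathcal{A}$ with $\mathcal{E}=\Omega^1(\mathcal{A})$ a finitely generated projective right $\mathcal{A}$-module satisfying: (1) $\mathcal{E}=\mathcal{Z}(\mathcal{E})\otimes_{\mathcal{Z}(\mathcal{A})}\mathcal{A}$; (2) $\mathcal{E}\otimes_{\mathcal{A}}\mathcal{E}=\ker(\wedge)\oplus\mathcal{F}$ with $\mathcal{F}$ a right submodule and $Q=\wedge|_{\mathcal{F}}:\mathcal{F}\to\Omega^2(\mathcal{A})$ a right $\mathcal{A}$-linear isomorphism; (3) $\sigma(\omega\otimes_{\mathcal{A}}\eta)=\eta\otimes_{\mathcal{A}}\omega$ for all $\omega,\eta\in\mathcal{Z}(\mathcal{E})$. Let $\nabla_0$ be as in the context. Then: (a) if $\omega\in\mathcal{Z}(\mathcal{E})$ then $d\omega\in\mathcal{Z}(\Omega^2(\mathcal{A}))$; (b) if $\omega\in\mathcal{Z}(\mathcal{E})$ then $(1-\sigma)\nabla_0(\omega)\in\mathcal{Z}(\mathcal{E}\otimes_{\mathcal{A}}\mathcal{E})$.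
   Context: A differential calculus: $\Omega(\mathcal{A})=\oplus_{j\ge0}\Omega^j(\mathcal{A})$, $\Omega^0=\mathcal{A}$, bimodules $\Omega^j$, an $\mathcal{A}$-bimodule product $\wedge$ adding degrees, $d$ of degree one with $d^2=0$ and $d(\omega\wedge\eta)=d\omega\wedge\eta+(-1)^{\deg\omega}\omega\wedge d\eta$, $\Omega^j$ right-spanned by $da_0\wedge\cdots\wedge da_{j-1}$. $\wedge:\mathcal{E}\otimes_{\mathcal{A}}\mathcal{E}\to\Omega^2(\mathcal{A})$ is the induced product; $P_{\rm sym}$ the idempotent with image $\ker\wedge$ and kernel $\mathcal{F}$; $\sigma=2P_{\rm sym}-1$. $\mathcal{Z}(\mathcal{M})=\{m:am=ma\ \forall a\in\mathcal{A}\}$ for a bimodule $\mathcal{M}$. A connection is a $\mathbb{C}$-linear $\nabla:\mathcal{E}\to\mathcal{E}\otimes_{\mathcal{A}}\mathcal{E}$ with $\nabla(\omega a)=\nabla(\omega)a+\omega\otimes_{\mathcal{A}}da$. With an idempotent $p\in M_n(\mathcal{A})$, $p(\mathcal{A}^n)=\mathcal{E}$, $\Phi_j=p(e_j)$, the Grassmann connection is $\nabla^{Gr}(\sum_j\Phi_ja_j)=\sum_j\Phi_j\otimes_{\mathcal{A}}da_j$, and $\nabla_0:=\nabla^{Gr}-Q^{-1}\circ(\wedge\circ\nabla^{Gr}+d)$, a connection with $\wedge\circ\nabla_0+d=0$. *)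

(* Defs.v *)
From mathcomp Require Import all_boot all_algebra.
From mathcomp Require Import complex Rstruct.
Set Implicit Arguments. Unset Strict Implicit. Unset Printing Implicit Defensive.
Import GRing.Theory.
Local Open Scope ring_scope.

Notation CC := (Rdefinitions.R[i]).

Section Defs.
Variable A : algType CC.

Definition is_bimodule (M : lmodType CC) (la : A -> M -> M) (ra : M -> A -> M)
  : Prop :=
  [/\ (forall m, la 1 m = m) /\ (forall m, ra m 1 = m),
      (forall a b m, la (a * b) m = la a (la b m)) /\
      (forall a b m, ra m (a * b) = ra (ra m a) b),
      (forall a b m, la (a + b) m = la a m + la b m) /\
      (forall a m n, la a (m + n) = la a m + la a n) /\
      (forall a b m, ra m (a + b) = ra m a + ra m b) /\
      (forall a m n, ra (m + n) a = ra m a + ra n a),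
      (forall (c : CC) a m, la (c *: a) m = c *: la a m) /\
      (forall (c : CC) a m, la a (c *: m) = c *: la a m) /\
      (forall (c : CC) a m, ra m (c *: a) = c *: ra m a) /\
      (forall (c : CC) a m, ra (c *: m) a = c *: ra m a)
    & forall a b m, la a (ra m b) = ra (la a m) b].

Definition central (M : Type) (la : A -> M -> M) (ra : M -> A -> M) (m : M)
  : Prop := forall a : A, la a m = ra m a.

Definition centralA (c : A) : Prop := forall a : A, a * c = c * a.

(* A differential calculus, recorded in degrees 0, 1, 2:
   Omega^0 = A, Omega^1 = O1, Omega^2 = O2, d : A -> O1, d : O1 -> O2,
   and the product wedge : O1 x O1 -> O2 (products with Omega^0 are the
   bimodule actions). *)
Record calc2 := Calc2 {
  O1 : lmodType CC;
  l1 : A -> O1 -> O1;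
  r1 : O1 -> A -> O1;
  O2 : lmodType CC;
  l2 : A -> O2 -> O2;
  r2 : O2 -> A -> O2;
  d0 : A -> O1;
  d1 : O1 -> O2;
  wedge : O1 -> O1 -> O2 }.
Arguments l1 : clear implicits. Arguments r1 : clear implicits.
Arguments l2 : clear implicits. Arguments r2 : clear implicits.
Arguments d0 : clear implicits. Arguments d1 : clear implicits.
Arguments wedge : clear implicits.

Definition is_calc2 (Om : calc2) : Prop :=
  [/\ is_bimodule (l1 Om) (r1 Om) /\ is_bimodule (l2 Om) (r2 Om),
      ((forall w w' v, wedge Om (w + w') v = wedge Om w v + wedge Om w' v) /\
       (forall w v v', wedge Om w (v + v') = wedge Om w v + wedge Om w v') /\
       (forall (c : CC) w v, wedge Om (c *: w) v = c *: wedge Om w v) /\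
       (forall (c : CC) w v, wedge Om w (c *: v) = c *: wedge Om w v) /\
       (forall a w v, wedge Om (l1 Om a w) v = l2 Om a (wedge Om w v)) /\
       (forall a w v, wedge Om (r1 Om w a) v = wedge Om w (l1 Om a v)) /\
       (forall a w v, wedge Om w (r1 Om v a) = r2 Om (wedge Om w v) a)),
      ((forall a b, d0 Om (a + b) = d0 Om a + d0 Om b) /\
       (forall (c : CC) a, d0 Om (c *: a) = c *: d0 Om a) /\
       (forall w v, d1 Om (w + v) = d1 Om w + d1 Om v) /\
       (forall (c : CC) w, d1 Om (c *: w) = c *: d1 Om w)),
      ((forall a b, d0 Om (a * b) = r1 Om (d0 Om a) b + l1 Om a (d0 Om b)) /\
       (forall a w, d1 Om (l1 Om a w) = wedge Om (d0 Om a) w + l2 Om a (d1 Om w)) /\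
       (forall a w, d1 Om (r1 Om w a) = r2 Om (d1 Om w) a - wedge Om w (d0 Om a)) /\
       (forall a, d1 Om (d0 Om a) = 0))
    &
      ((forall w : O1 Om, exists k (a b : 'I_k -> A),
          w = \sum_(i < k) r1 Om (d0 Om (a i)) (b i)) /\
       (forall x : O2 Om, exists k (a0 a1 b : 'I_k -> A),
          x = \sum_(i < k) r2 Om (wedge Om (d0 Om (a0 i)) (d0 Om (a1 i))) (b i)))].

(* E = O1 is a finitely generated projective right A-module, presented as
   E ~= p(A^n) with p = iota o pi an idempotent:  iota : E -> A^n and
   pi : A^n -> E right A-linear with pi o iota = id. *)
Definition fgp_presentation (Om : calc2) (n : nat)
    (iota : O1 Om -> 'I_n -> A) (pi : ('I_n -> A) -> O1 Om) : Prop :=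
  [/\ forall w v, iota (w + v) = (fun j => iota w j + iota v j),
      forall w a, iota (r1 Om w a) = (fun j => iota w j * a),
      forall x y, pi (fun j => x j + y j) = pi x + pi y,
      forall x a, pi (fun j => x j * a) = r1 Om (pi x) a
    & forall w, pi (iota w) = w].

Definition Phi (Om : calc2) (n : nat) (pi : ('I_n -> A) -> O1 Om) (j : 'I_n)
  : O1 Om := pi (fun k => if k == j then 1 else 0).

(* (T, tens) is the tensor product E (x)_A E of A-bimodules, with its
   bimodule structure (lT, rT), characterised by its universal property. *)
Definition is_tensor_EE (Om : calc2) (T : lmodType CC)
    (lT : A -> T -> T) (rT : T -> A -> T) (tens : O1 Om -> O1 Om -> T) : Prop :=
  [/\ is_bimodule lT rT,
      (forall w w' v, tens (w + w') v = tens w v + tens w' v) /\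
      (forall w v v', tens w (v + v') = tens w v + tens w v') /\
      (forall (c : CC) w v, tens (c *: w) v = c *: tens w v) /\
      (forall a w v, tens (r1 Om w a) v = tens w (l1 Om a v)),
      (forall a w v, lT a (tens w v) = tens (l1 Om a w) v) /\
      (forall a w v, rT (tens w v) a = tens w (r1 Om v a)),
      (forall (M : zmodType) (f : O1 Om -> O1 Om -> M),
         (forall w w' v, f (w + w') v = f w v + f w' v) ->
         (forall w v v', f w (v + v') = f w v + f w v') ->
         (forall a w v, f (r1 Om w a) v = f w (l1 Om a v)) ->
         exists g : T -> M, (forall t s, g (t + s) = g t + g s) /\
                            (forall w v, g (tens w v) = f w v))
    &
      (forall (M : zmodType) (g1 g2 : T -> M),
         (forall t s, g1 (t + s) = g1 t + g1 s) ->
         (forall t s, g2 (t + s) = g2 t + g2 s) ->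
         (forall w v, g1 (tens w v) = g2 (tens w v)) ->
         forall t, g1 t = g2 t)].

(* Hypothesis (1): E = Z(E) (x)_{Z(A)} A, i.e. E together with the map
   (z, a) |-> z a on Z(E) x A satisfies the universal property of the
   tensor product of the Z(A)-modules Z(E) and A over Z(A). *)
Definition centrally_generated (Om : calc2) : Prop :=
  (forall (M : zmodType) (f : O1 Om -> A -> M),
     (forall z z' a, central (l1 Om) (r1 Om) z -> central (l1 Om) (r1 Om) z' ->
        f (z + z') a = f z a + f z' a) ->
     (forall z a a', central (l1 Om) (r1 Om) z -> f z (a + a') = f z a + f z a') ->
     (forall z c a, central (l1 Om) (r1 Om) z -> centralA c ->
        f (r1 Om z c) a = f z (c * a)) ->
     exists g : O1 Om -> M, (forall w v, g (w + v) = g w + g v) /\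
       (forall z a, central (l1 Om) (r1 Om) z -> g (r1 Om z a) = f z a)) /\
  (forall (M : zmodType) (g1 g2 : O1 Om -> M),
     (forall w v, g1 (w + v) = g1 w + g1 v) ->
     (forall w v, g2 (w + v) = g2 w + g2 v) ->
     (forall z a, central (l1 Om) (r1 Om) z -> g1 (r1 Om z a) = g2 (r1 Om z a)) ->
     forall w, g1 w = g2 w).

(* Hypothesis (2): E (x)_A E = ker(wedge) (+) F, F a right submodule, and
   Q = wedge|_F : F -> Omega^2 a (right A-linear) isomorphism, with inverse
   Qinv : Omega^2 -> F (F is given as a subset of T). *)
Definition wedge_splitting (Om : calc2) (T : lmodType CC) (rT : T -> A -> T)
    (wedgeT : T -> O2 Om) (F : T -> Prop) (Qinv : O2 Om -> T) : Prop :=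
  [/\ F 0 /\ (forall t s, F t -> F s -> F (t + s)) /\
        (forall (c : CC) t, F t -> F (c *: t)) /\
        (forall t a, F t -> F (rT t a)),
      (forall t, F t -> wedgeT t = 0 -> t = 0),
      (forall t, exists k f, wedgeT k = 0 /\ F f /\ t = k + f),
      (forall t a, F t -> wedgeT (rT t a) = r2 Om (wedgeT t) a)
    & forall x, F (Qinv x) /\ wedgeT (Qinv x) = x].

(* P_sym : the idempotent with image ker(wedge) and kernel F. *)
Definition Psym (Om : calc2) (T : lmodType CC) (wedgeT : T -> O2 Om)
    (Qinv : O2 Om -> T) (t : T) : T := t - Qinv (wedgeT t).

Definition sigma (Om : calc2) (T : lmodType CC) (wedgeT : T -> O2 Om)
    (Qinv : O2 Om -> T) (t : T) : T := 2%:R *: Psym wedgeT Qinv t - t.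

(* The Grassmann connection nabla^Gr(sum_j Phi_j a_j) = sum_j Phi_j (x) d a_j,
   where (a_j) = iota(w) are the coordinates of w in p(A^n). *)
Definition nablaGr (Om : calc2) (T : lmodType CC) (tens : O1 Om -> O1 Om -> T)
    (n : nat) (iota : O1 Om -> 'I_n -> A) (pi : ('I_n -> A) -> O1 Om)
    (w : O1 Om) : T :=
  \sum_(j < n) tens (Phi pi j) (d0 Om (iota w j)).

Definition nabla0 (Om : calc2) (T : lmodType CC) (tens : O1 Om -> O1 Om -> T)
    (wedgeT : T -> O2 Om) (Qinv : O2 Om -> T)
    (n : nat) (iota : O1 Om -> 'I_n -> A) (pi : ('I_n -> A) -> O1 Om)
    (w : O1 Om) : T :=
  nablaGr tens iota pi w - Qinv (wedgeT (nablaGr tens iota pi w) + d1 Om w).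

End Defs.

Arguments l1 {A} c _ _. Arguments r1 {A} c _ _.
Arguments l2 {A} c _ _. Arguments r2 {A} c _ _.
Arguments d0 {A} c _. Arguments d1 {A} c _.
Arguments wedge {A} c _ _.

(* Main.v *)
Require Import Defs.
From mathcomp Require Import all_boot all_algebra.
From mathcomp Require Import complex Rstruct.
Local Open Scope ring_scope.
Import GRing.Theory Num.Theory.

Lemma addf0 (U V : zmodType) (f : U -> V) :
  (forall x y, f (x + y) = f x + f y) -> f 0 = 0.
Proof. by move=> h; apply: (@addrI _ (f 0)); rewrite -h !addr0. Qed.

Lemma addfN (U V : zmodType) (f : U -> V) :
  (forall x y, f (x + y) = f x + f y) -> forall x, f (- x) = - f x.
Proof.
by move=> h x; apply: (@addrI _ (f x)); rewrite -h !subrr (@addf0 _ _ f h).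
Qed.

Lemma addfB (U V : zmodType) (f : U -> V) :
  (forall x y, f (x + y) = f x + f y) -> forall x y, f (x - y) = f x - f y.
Proof. by move=> h x y; rewrite h (@addfN _ _ f h). Qed.

Theorem lemma6p4
  (A : algType CC) (Om : calc2 A) (hOm : is_calc2 Om)
  (n : nat) (iota : O1 Om -> 'I_n -> A) (pi : ('I_n -> A) -> O1 Om)
  (hfgp : fgp_presentation iota pi)
  (T : lmodType CC) (lT : A -> T -> T) (rT : T -> A -> T)
  (tens : O1 Om -> O1 Om -> T) (hT : is_tensor_EE lT rT tens)
  (wedgeT : T -> O2 Om)
  (hwT : (forall t s, wedgeT (t + s) = wedgeT t + wedgeT s) /\
         (forall w v, wedgeT (tens w v) = wedge Om w v))
  (h1 : centrally_generated Om)
  (F : T -> Prop) (Qinv : O2 Om -> T)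
  (h2 : wedge_splitting rT wedgeT F Qinv)
  (h3 : forall w v, central (l1 Om) (r1 Om) w ->
          central (l1 Om) (r1 Om) v ->
          sigma wedgeT Qinv (tens w v) = tens v w) :
  forall w : O1 Om, central (l1 Om) (r1 Om) w ->
    central (l2 Om) (r2 Om) (d1 Om w) /\
    central lT rT
      (nabla0 tens wedgeT Qinv iota pi w
       - sigma wedgeT Qinv (nabla0 tens wedgeT Qinv iota pi w)).
Proof.
move=> w cw.
case: hOm => [[bm1 bm2] hw hd hl _].
case: bm1 => [_ [l1mul r1mul] [l1D1 [l1D2 [r1D1 r1D2]]] _ comp1].
case: bm2 => [_ _ [l2D1 [l2D2 [r2D1 r2D2]]] _ _].
case: hw => [wD1 [wD2 [_ [_ [wl [wmid wr]]]]]].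
case: hl => [_ [d1l [d1r _]]].
case: hT => [bmT [tD1 [tD2 [_ tmid]]] [tl tr] _ tuniq].
case: bmT => [_ [lTmul rTmul] [lTD1 [lTD2 [rTD1 rTD2]]] [_ [lTZ [_ rTZ]]] compT].
case: hwT => [wTD wTt].
case: h1 => [_ cuniq].
case: h2 => [[F0 [FD [FZ Fr]]] Fk _ Fwr FQ].
have FN : forall t, F t -> F (- t) by move=> t Ft; rewrite -scaleN1r; exact: (FZ).
have wTN := @addfN _ _ _ wTD.
have wTB := @addfB _ _ _ wTD.
have wTQ : forall x, wedgeT (Qinv x) = x by move=> x; case: (FQ x).
have FQi : forall x, F (Qinv x) by move=> x; case: (FQ x).
have QD : forall x y, Qinv (x + y) = Qinv x + Qinv y.
  move=> x y; apply/eqP; rewrite -subr_eq0; apply/eqP; apply: (Fk).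
    by apply: (FD); [exact: (FQi) | apply: (FN); apply: (FD); exact: (FQi)].
  by rewrite wTB wTD !wTQ subrr.
have Qr : forall x a, Qinv (r2 Om x a) = rT (Qinv x) a.
  move=> x a; apply/eqP; rewrite -subr_eq0; apply/eqP; apply: (Fk).
    by apply: (FD); [exact: (FQi) | apply: (FN); apply: (Fr); exact: (FQi)].
  by rewrite wTB Fwr // !wTQ subrr.
have sigmaE : forall t, sigma wedgeT Qinv t = t - 2%:R *: Qinv (wedgeT t).
  move=> t; rewrite /sigma /Psym scalerBr [2%:R *: t]scaler_nat mulr2n.
  by rewrite addrAC addrK.
have wTsig : forall t, wedgeT (sigma wedgeT Qinv t) = - wedgeT t.
  move=> t; rewrite /sigma /Psym wTB scaler_nat mulr2n wTD wTB wTQ subrr.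
  by rewrite !add0r.
have r20 := fun a => @addf0 _ _ _ (r2D2 a).
have anti : forall v, wedge Om v w + wedge Om w v = 0.
  move=> v.
  have := cuniq _ (fun v => wedge Om v w + wedge Om w v) (fun _ => 0)
    _ _ _ v; apply.
  - by move=> x y; rewrite wD1 wD2 addrACA.
  - by move=> *; rewrite addr0.
  move=> z a cz; rewrite wmid cw wr wr -r2D2.
  have -> : wedge Om w z = - wedge Om z w.
    by rewrite -!wTt -h3 // wTsig.
  by rewrite subrr r20.
have partA : central (l2 Om) (r2 Om) (d1 Om w).
  move=> a; have := d1l a w; rewrite cw d1r.
  have -> : wedge Om (d0 Om a) w = - wedge Om w (d0 Om a).
    by apply/eqP; rewrite -addr_eq0 anti.
  by move=> h; apply: (addIr (- wedge Om w (d0 Om a))); rewrite addrC h.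
split => //.
have rTN : forall a t, rT (- t) a = - rT t a by move=> a; apply: (@addfN _ _ _) => x y; apply: rTD2.
have lTN : forall a t, lT a (- t) = - lT a t by move=> a; apply: (@addfN _ _ _) => x y; apply: lTD2.
have rTB : forall a t s, rT (t - s) a = rT t a - rT s a by move=> a; apply: (@addfB _ _ _) => x y; apply: rTD2.
have lTB : forall a t s, lT a (t - s) = lT a t - lT a s by move=> a; apply: (@addfB _ _ _) => x y; apply: lTD2.
have wTl : forall a t, wedgeT (lT a t) = l2 Om a (wedgeT t).
  move=> a; apply: ((tuniq) _ (fun t => wedgeT (lT a t)) (fun t => l2 Om a (wedgeT t))).
  - by move=> t s; rewrite lTD2 wTD.
  - by move=> t s; rewrite wTD l2D2.
  by move=> x y; rewrite tl !wTt wl.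
have sigD : forall t s, sigma wedgeT Qinv (t + s) =
    sigma wedgeT Qinv t + sigma wedgeT Qinv s.
  by move=> t s; rewrite !sigmaE wTD QD scalerDr opprD addrACA.
have sigr : forall t a, sigma wedgeT Qinv (rT t a) = rT (sigma wedgeT Qinv t) a.
  move=> t a; rewrite !sigmaE rTB rTZ -Qr; congr (_ - _ *: Qinv _).
  apply: ((tuniq) _ (fun t => wedgeT (rT t a)) (fun t => r2 Om (wedgeT t) a)).
  - by move=> x y; rewrite rTD2 wTD.
  - by move=> x y; rewrite wTD r2D2.
  by move=> x y; rewrite tr !wTt wr.
have cT : forall z z' a, central (l1 Om) (r1 Om) z -> central (l1 Om) (r1 Om) z' ->
    lT a (tens z z') = rT (tens z z') a.
  by move=> z z' a cz cz'; rewrite tl cz tmid cz' tr.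
have sigl : forall a t, sigma wedgeT Qinv (lT a t) = lT a (sigma wedgeT Qinv t).
  move=> a.
  have step1 : forall z v, central (l1 Om) (r1 Om) z ->
      sigma wedgeT Qinv (lT a (tens z v)) = lT a (sigma wedgeT Qinv (tens z v)).
    move=> z v cz.
    apply: ((cuniq) _ (fun v => sigma wedgeT Qinv (lT a (tens z v)))
                    (fun v => lT a (sigma wedgeT Qinv (tens z v)))).
    - by move=> x y; rewrite tD2 lTD2 sigD.
    - by move=> x y; rewrite tD2 sigD lTD2.
    move=> z' b cz'; rewrite -tr compT cT // -rTmul sigr h3 //.
    by rewrite sigr h3 // compT cT // -rTmul.
  apply: ((tuniq) _ (fun t => sigma wedgeT Qinv (lT a t))
                  (fun t => lT a (sigma wedgeT Qinv t))).
  - by move=> x y; rewrite lTD2 sigD.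
  - by move=> x y; rewrite sigD lTD2.
  move=> x v.
  apply: ((cuniq) _ (fun x => sigma wedgeT Qinv (lT a (tens x v)))
                  (fun x => lT a (sigma wedgeT Qinv (tens x v)))).
  - by move=> y y'; rewrite tD1 lTD2 sigD.
  - by move=> y y'; rewrite tD1 sigD lTD2.
  by move=> z b cz; rewrite tmid step1.
have two0 : (2%:R : CC) != 0 by rewrite pnatr_eq0.
set t0 := nabla0 _ _ _ _ _ _.
have wt0 : wedgeT t0 = - d1 Om w.
  by rewrite /t0 /nabla0 wTB wTQ opprD addNKr.
rewrite sigmaE subKr wt0 => a.
rewrite lTZ rTZ; congr (_ *: _).
set q := Qinv (- d1 Om w).
have sq : sigma wedgeT Qinv q = - q.
  by rewrite sigmaE wTQ -/q scaler_nat mulr2n opprD addNKr.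
have : sigma wedgeT Qinv (lT a q) = - lT a q by rewrite sigl sq lTN.
rewrite sigmaE => H.
have e : lT a q *+ 2 = 2%:R *: Qinv (wedgeT (lT a q)).
  by rewrite mulr2n -{1}(opprK (lT a q)) -H opprB subrK.
have e2 : lT a q = Qinv (wedgeT (lT a q)).
  by apply: (scalerI two0); rewrite -e scaler_nat.
rewrite e2 wTl wTQ /q -Qr; f_equal.
by rewrite (@addfN _ _ _ (l2D2 a)) partA (@addfN _ _ _ (r2D2 a)).
Qed.
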